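(* Let $\lambda\vdash n$ with ${\rm aft}(\lambda)=k$. Then $f^\lambda\leq n^k/\sqrt{k!}$ and $f^\lambda\geq \binom{n-k}{k}$.
   Context: For $\lambda\vdash n$, ${\rm aft}(\lambda):=n-\max\{\lambda_1,\ell(\lambda)\}$, where $\ell(\lambda)$ is the number of nonzero parts. $f^\lambda$ denotes the number of standard Young tableaux of shape $\lambda$. *)

(* Defs.v *)
From HB Require Import structures.
From mathcomp Require Import all_boot all_order all_algebra.
Set Implicit Arguments. Unset Strict Implicit. Unset Printing Implicit Defensive.
Import Order.TTheory GRing.Theory Num.Theory.

Definition is_partition (n : nat) (la : seq nat) : bool :=
  [&& sorted geq la, all (fun p => 0 < p) la & sumn la == n].

Definition plength (la : seq nat) : nat := size la.
Definition part1 (la : seq nat) : nat := head 0 la.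

Definition aft (la : seq nat) : nat := sumn la - maxn (part1 la) (plength la).

(* Cell (i, j) (row i, column j, 0-indexed) lies in the Young diagram of la. *)
Definition in_shape (la : seq nat) (i j : nat) : bool := j < nth 0 la i.

(* A standard Young tableau of shape la (|la| = N): a filling of the cells of
   the diagram (all of which have coordinates < N) by 1..N, each used once,
   strictly increasing along rows and down columns.  Cells outside the
   diagram carry the dummy value 0. *)
Arguments in_shape : clear implicits.
Definition is_syt (la : seq nat)
    (t : {ffun 'I_(sumn la) * 'I_(sumn la) -> 'I_(sumn la).+1}) : bool :=
  [&& [forall c : 'I_(sumn la) * 'I_(sumn la),
         (nat_of_ord (t c) != 0) == in_shape la c.1 c.2],
      [forall c : 'I_(sumn la) * 'I_(sumn la), forall d : 'I_(sumn la) * 'I_(sumn la),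
         [&& in_shape la c.1 c.2, in_shape la d.1 d.2 & t c == t d] ==> (c == d)],
      [forall c : 'I_(sumn la) * 'I_(sumn la), forall d : 'I_(sumn la) * 'I_(sumn la),
         [&& in_shape la d.1 d.2, nat_of_ord c.1 == d.1 & nat_of_ord c.2 < d.2]
           ==> (nat_of_ord (t c) < t d)] &
      [forall c : 'I_(sumn la) * 'I_(sumn la), forall d : 'I_(sumn la) * 'I_(sumn la),
         [&& in_shape la d.1 d.2, nat_of_ord c.2 == d.2 & nat_of_ord c.1 < d.1]
           ==> (nat_of_ord (t c) < t d)]].

Arguments is_syt : clear implicits.
Definition nsyt (la : seq nat) : nat := #|[set t | is_syt la t]|.

(* Main.v *)
Require Import Defs.
From HB Require Import structures.
From mathcomp Require Import all_boot all_order all_algebra.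
From mathcomp Require Import zify.
Set Implicit Arguments. Unset Strict Implicit. Unset Printing Implicit Defensive.


Fixpoint strip (s : seq nat) : seq nat :=
  if s is x :: s' then
    (let t := strip s' in if (t == [::]) && (x == 0) then [::] else x :: t)
  else [::].

Lemma nth_strip s r : nth 0 (strip s) r = nth 0 s r.
Proof.
elim: s r => [|x s IH] r //=.
case: ifP => [/andP[/eqP e /eqP ->]|_].
  case: r => [|r] //=. by rewrite -IH e nth_nil.
by case: r.
Qed.

Lemma last_strip s : last 1 (strip s) != 0.
Proof.
elim: s => [|x s IH] //=.
case: ifP => //= /negbT; rewrite negb_and.
case E: (strip s) IH => [|y t] //=.
Qed.

Lemma size_strip s : size (strip s) <= size s.
Proof.
elim: s => [|x s IH] //=. by case: ifP => //= _; rewrite ltnS.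
Qed.

Lemma canon_eq s t : last 1 s != 0 -> last 1 t != 0 ->
  (forall r, nth 0 s r = nth 0 t r) -> s = t.
Proof.
move=> hs ht e.
have key : forall u v : seq nat, last 1 u != 0 ->
    (forall r, nth 0 u r = nth 0 v r) -> size u <= size v.
  move=> u v hu huv; case: u hu huv => [|x u] // hu huv.
  rewrite leqNgt; apply/negP => lt.
  have := huv (size u). rewrite [nth 0 v _]nth_default; last by rewrite -ltnS.
  move=> h; move: hu; by rewrite /= (last_nth 0) h.
have ss : size s = size t.
  by apply/eqP; rewrite eqn_leq !key // => r; rewrite e.
apply: (eq_from_nth (x0 := 0)) ss _ => r _; exact: e.
Qed.

Definition dec (s : seq nat) j := set_nth 0 s j (nth 0 s j).-1.
Definition rmc s j := strip (dec s j).
Definition addok (s : seq nat) i := (i == 0) || (nth 0 s i < nth 0 s i.-1).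
Definition remok (s : seq nat) j := nth 0 s j.+1 < nth 0 s j.

Lemma nth_rmc s j r : nth 0 (rmc s j) r = nth 0 s r - (r == j).
Proof.
rewrite /rmc nth_strip /dec nth_set_nth /=.
case: eqP => [->|_]; rewrite ?subn0 //; lia.
Qed.

Lemma nth_addc s i r : nth 0 (incr_nth s i) r = nth 0 s r + (r == i).
Proof. by rewrite nth_incr_nth addnC eq_sym. Qed.

Definition ispart (s : seq nat) := (forall r, nth 0 s r.+1 <= nth 0 s r) /\ last 1 s != 0.

Lemma last_nth_size (s : seq nat) : s != [::] -> last 1 s = nth 0 s (size s).-1.
Proof. case: s => // x s _. by rewrite /= (last_nth 0). Qed.

Lemma size_part_lt s r : ispart s -> (r < size s) = (0 < nth 0 s r).
Proof.
move=> [dec_s ls].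
case: (ltnP r (size s)) => h; last by rewrite nth_default.
apply/esym; have : 0 < nth 0 s (size s).-1.
  by rewrite lt0n -last_nth_size //; case: s h {dec_s} ls.
have : forall a b, a <= b -> nth 0 s b <= nth 0 s a.
  move=> a b /subnK <-; elim: (b - a) => [|m IH] //=.
  by rewrite addSn; apply: leq_trans (dec_s _) IH.
move=> mono pos; apply: leq_trans pos (mono _ _ _); lia.
Qed.


Definition ups (s : seq nat) := map (incr_nth s) (filter (addok s) (iota 0 (size s).+1)).
Definition downs (s : seq nat) := map (rmc s) (filter (remok s) (iota 0 (size s))).

Lemma sum_ups (g : seq nat -> nat) s m : (size s).+1 <= m ->
  \sum_(x <- ups s) g x = \sum_(i < m | addok s i) g (incr_nth s i).
Proof.
move=> h; rewrite big_map big_filter -(big_mkord (addok s) (fun i => g (incr_nth s i))) /index_iota subn0.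
rewrite -(subnKC h) iotaD big_cat /= [X in _ + X]big1_seq ?addn0 //.
move=> i /andP[ai]; rewrite mem_iota => /andP[hi _]; move: ai.
rewrite /addok; have -> : (i == 0) = false by lia.
by rewrite !nth_default //; lia.
Qed.

Lemma sum_downs (g : seq nat -> nat) s m : size s <= m ->
  \sum_(x <- downs s) g x = \sum_(j < m | remok s j) g (rmc s j).
Proof.
move=> h; rewrite big_map big_filter -(big_mkord (remok s) (fun i => g (rmc s i))) /index_iota subn0.
rewrite -(subnKC h) iotaD big_cat /= [X in _ + X]big1_seq ?addn0 //.
move=> i /andP[ai]; rewrite mem_iota => /andP[hi _]; move: ai.
by rewrite /remok !nth_default //; lia.
Qed.

Lemma lastP (t : seq nat) : (last 1 t != 0) = (size t == 0) || (0 < nth 0 t (size t).-1).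
Proof. case: t => //= x t. by rewrite (last_nth 0) lt0n. Qed.

Lemma last_incr s i : last 1 s != 0 -> addok s i -> last 1 (incr_nth s i) != 0.
Proof.
rewrite !lastP size_incr_nth /addok nth_addc.
case: (ltnP i (size s)) => hi.
  move=> /orP[/eqP|]; first by lia.
  move=> h _; apply/orP; right; lia.
move=> _ /orP[/eqP i0|]; first by subst i; case: s hi.
case: (ltnP (size s) i) => hs.
  by rewrite !nth_default //; lia.
have -> : i = size s by lia.
by rewrite /= eqxx; lia.
Qed.

Lemma size_rmc s j : size (rmc s j) <= maxn j.+1 (size s).
Proof. by rewrite /rmc (leq_trans (size_strip _)) // size_set_nth. Qed.

Lemma size_incr_le s i : size (incr_nth s i) <= maxn i.+1 (size s).
Proof. rewrite size_incr_nth; case: ifP; lia. Qed.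

Lemma ispart_incr s i : ispart s -> addok s i -> ispart (incr_nth s i).
Proof.
move=> [d l] a; split; last exact: last_incr.
move=> r; rewrite !nth_addc; move: a (d r); rewrite /addok.
case: (eqVneq r.+1 i) => [<-|_] /=; last by case: (r == i); lia.
lia.
Qed.

Lemma ispart_rmc s j : ispart s -> remok s j -> ispart (rmc s j).
Proof.
move=> [d l] a; split; last exact: last_strip.
move=> r; rewrite !nth_rmc; move: a (d r); rewrite /remok.
case: (eqVneq r.+1 j) => [<-|_] /=; first by have := d r.+1; lia.
by case: eqP => [->|]; lia.
Qed.

Lemma ups_part s x : ispart s -> x \in ups s -> ispart x.
Proof. by move=> p /mapP[i]; rewrite mem_filter => /andP[a _] ->; apply: ispart_incr. Qed.

Lemma downs_part s x : ispart s -> x \in downs s -> ispart x.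
Proof. by move=> p /mapP[i]; rewrite mem_filter => /andP[a _] ->; apply: ispart_rmc. Qed.

Lemma sumn_nth_lt (s : seq nat) m : size s <= m -> sumn s = \sum_(r < m) nth 0 s r.
Proof.
move=> h; rewrite -(big_mkord xpredT (fun r => nth 0 s r)) sumnE (big_nth 0) /index_iota !subn0.
rewrite -(subnKC h) iotaD big_cat /=.
rewrite [X in _ = _ + X]big1_seq ?addn0 //.
by move=> i /andP[_]; rewrite mem_iota => /andP[hi _]; rewrite nth_default //; lia.
Qed.


Lemma cond_equiv (v : seq nat) i j :
  [&& addok v i, remok (incr_nth v i) j & j != i] =
  [&& remok v j, addok (rmc v j) i & i != j].
Proof.
rewrite /addok /remok !nth_addc !nth_rmc.
case: i => [|i] /=.
  rewrite (eq_sym j 0); case: j => [|j] //=; lia.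
case: (eqVneq i j) => [->|ne]; first by rewrite eqxx /=; lia.
have -> : (j.+1 == i.+1) = false by apply/negbTE; rewrite eqSS eq_sym.
lia.
Qed.

Lemma term_equiv (v : seq nat) i j : remok v j -> addok (rmc v j) i -> i != j ->
  rmc (incr_nth v i) j = incr_nth (rmc v j) i.
Proof.
move=> rj ai ne; apply: canon_eq; first exact: last_strip.
  by apply: last_incr => //; exact: last_strip.
move=> r; rewrite !nth_rmc !nth_addc !nth_rmc; move: rj; rewrite /remok.
case: (eqVneq r j) => [->|]; last by lia.
by rewrite eq_sym (negbTE ne); lia.
Qed.

Lemma comm (g : seq nat -> nat) v : ispart v ->
  \sum_(x <- ups v) \sum_(y <- downs x) g y =
  \sum_(x <- downs v) \sum_(y <- ups x) g y + g v.
Proof.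
move=> pv; have [d l] := pv.
pose M := (size v).+2.
rewrite (sum_ups _ (m := M)) //.
have E1 : forall i : 'I_M, addok v i -> \sum_(y <- downs (incr_nth v i)) g y =
   g v + \sum_(j < M | remok (incr_nth v i) j && (j != i)) g (rmc (incr_nth v i) j).
  move=> i ai; rewrite (sum_downs _ (m := M)); last first.
    apply: leq_trans (size_incr_le _ _) _; have := ltn_ord i; rewrite /M; lia.
  rewrite (bigD1 i) /=; last first.
    by rewrite /remok !nth_addc eqxx; have := d i; case: eqP; lia.
  congr (g _ + _); apply: canon_eq => //; first exact: last_strip.
  by move=> r; rewrite nth_rmc nth_addc; lia.
rewrite (eq_bigr _ E1) big_split /=.
rewrite (sum_downs _ (m := M)) //; last by rewrite /M; lia.
have E2 : forall j : 'I_M, remok v j -> \sum_(y <- ups (rmc v j)) g y =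
   g v + \sum_(i < M | addok (rmc v j) i && (i != j)) g (incr_nth (rmc v j) i).
  move=> j rj.
  have jlt : j < size v.
    by rewrite (size_part_lt _ pv); move: rj; rewrite /remok; lia.
  rewrite (sum_ups _ (m := M)); last first.
    have := size_rmc v j; rewrite /M; move: (size (rmc v j)) (nat_of_ord j) jlt => a b; lia.
  have aj : addok (rmc v j) j.
    rewrite /addok !nth_rmc eqxx; case: (nat_of_ord j) rj jlt => [|j'] //= rj _.
    have := d j'; move: rj; rewrite /remok; case: eqP; lia.
  rewrite (bigD1 j) //=.
  congr (g _ + _); apply: canon_eq => //.
    by apply: last_incr => //; exact: last_strip.
  move=> r; rewrite nth_addc nth_rmc; move: rj; rewrite /remok.
  by case: eqP => [->|]; lia.
rewrite (eq_bigr _ E2) big_split /=.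
have X : \sum_(i < M | addok v i)
     \sum_(j < M | remok (incr_nth v i) j && (j != i)) g (rmc (incr_nth v i) j) =
   \sum_(j < M | remok v j)
     \sum_(i < M | addok (rmc v j) i && (i != j)) g (incr_nth (rmc v j) i).
  transitivity (\sum_(i < M) \sum_(j < M)
      (if [&& addok v i, remok (incr_nth v i) j & j != i]
       then g (rmc (incr_nth v i) j) else 0)).
    rewrite big_mkcond /=; apply: eq_bigr => i _; case: ifP => a.
      by rewrite big_mkcond.
    by symmetry; apply: big1.
  rewrite exchange_big /=.
  transitivity (\sum_(j < M) \sum_(i < M)
      (if [&& remok v j, addok (rmc v j) i & i != j]
       then g (incr_nth (rmc v j) i) else 0)); last first.
    rewrite [RHS]big_mkcond /=; apply: eq_bigr => j _; case: ifP => a.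
      by rewrite [RHS]big_mkcond.
    by apply: big1.
  apply: eq_bigr => j _; apply: eq_bigr => i _.
  rewrite cond_equiv; case: ifP => // /and3P[rj ai ne].
  by rewrite term_equiv.
rewrite X.
suff -> : \sum_(i < M | addok v i) g v = \sum_(i < M | remok v i) g v + g v by rewrite addnAC.
rewrite (big_mkcond (fun i : 'I_M => addok v i)) (big_mkcond (fun i : 'I_M => remok v i)) /=.
rewrite big_ord_recl /= [in RHS]big_ord_recr /=.
have -> : (if remok v (size v).+1 then g v else 0) = 0.
  rewrite /remok !nth_default //; lia.
rewrite addn0 addnC; congr (_ + _); apply: eq_bigr => i _.
Qed.


Fixpoint NW (s : seq nat) (w : seq bool) {struct w} : nat :=
  match w with
  | [::] => 1
  | b :: w' => if b then \sum_(x <- ups s) NW x w' else \sum_(x <- downs s) NW x w'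
  end.

Lemma NW_UD v w : ispart v -> NW v (true :: false :: w) = NW v (false :: true :: w) + NW v w.
Proof. move=> pv; exact: (comm (fun y => NW y w) pv). Qed.

Lemma UaD a v w : ispart v ->
  NW v (nseq a true ++ false :: w) = NW v (false :: nseq a true ++ w) + a * NW v (nseq a.-1 true ++ w).
Proof.
elim: a v => [|a IH] v pv; first by rewrite /= addn0.
rewrite [LHS]/=.
rewrite (eq_big_seq (fun x => NW x (false :: nseq a true ++ w) + a * NW x (nseq a.-1 true ++ w))); last first.
  by move=> x xu; rewrite IH //; apply: ups_part xu.
rewrite big_split /= -big_distrr /=.
have -> : \sum_(i <- ups v) NW i (false :: nseq a true ++ w) = NW v (true :: false :: nseq a true ++ w) by [].
rewrite NW_UD //.
case: a {IH} => [|a]; first by rewrite mul0n addn0 mul1n.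
have -> : \sum_(i <- ups v) NW i (nseq a.+1.-1 true ++ w) = NW v (nseq a.+1 true ++ w) by [].
by rewrite -addnA -mulSn.
Qed.

Lemma ispart_nil : ispart [::].
Proof. by split => // r; rewrite nth_nil. Qed.

Lemma nseqS_cat (k : nat) (t : seq bool) : nseq k.+1 true ++ t = nseq k true ++ true :: t.
Proof. by elim: k => //= k ->. Qed.

Lemma NW_fact k : NW [::] (nseq k true ++ nseq k false) = k`!.
Proof.
elim: k => // k IH.
have -> : nseq k.+1 false = false :: nseq k false by [].
rewrite UaD; last exact: ispart_nil.
by rewrite /= big_nil add0n IH factS.
Qed.

Definition F (v : seq nat) := NW v (nseq (sumn v) false).

Lemma sumn_strip s : sumn (strip s) = sumn s.
Proof. elim: s => //= x s IH; case: ifP => /= [/andP[/eqP e /eqP ->]|_]; by rewrite -IH ?e. Qed.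

Lemma nth_le_sumn (s : seq nat) j : nth 0 s j <= sumn s.
Proof. elim: s j => [|x s IH] [|j] //=; first by rewrite leq_addr.
by rewrite (leq_trans (IH j)) // leq_addl. Qed.

Lemma sumn_rmc v j : remok v j -> sumn (rmc v j) = (sumn v).-1.
Proof.
rewrite /remok /rmc sumn_strip /dec sumn_set_nth0 => h.
have := nth_le_sumn v j; lia.
Qed.

Lemma downs_sumn v x : x \in downs v -> sumn x = (sumn v).-1.
Proof. by move=> /mapP[j]; rewrite mem_filter => /andP[rj _] ->; apply: sumn_rmc. Qed.

Lemma F_rec v n : sumn v = n.+1 -> F v = \sum_(x <- downs v) F x.
Proof.
move=> h; rewrite /F h /=; apply: eq_big_seq => x xd.
by rewrite (downs_sumn xd) h.
Qed.

Lemma F_nil : F [::] = 1.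
Proof. by []. Qed.

Lemma addok_size y j : addok y j -> j < (size y).+1.
Proof.
case: j => // j; rewrite /addok /= => h.
rewrite ltnS; case: (ltnP j (size y)) => // hs.
by move: h; rewrite !nth_default //; lia.
Qed.

Lemma downs_ups x y : ispart x -> y \in downs x -> x \in ups y.
Proof.
move=> [d l] /mapP[j]; rewrite mem_filter => /andP[rj _] ->.
have aj : addok (rmc x j) j.
  rewrite /addok !nth_rmc eqxx; case: j rj => [|j'] //= rj.
  have := d j'; move: rj; rewrite /remok; case: eqP; lia.
have xe : incr_nth (rmc x j) j = x.
  apply: canon_eq => //; first by apply: last_incr => //; exact: last_strip.
  move=> r; rewrite nth_addc nth_rmc; move: rj; rewrite /remok.
  by case: eqP => [->|]; lia.
move: (rmc x j) aj xe => z aj <-.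
apply: map_f; rewrite mem_filter aj mem_iota /= add0n; exact: addok_size aj.
Qed.


Lemma uniq_ups v : uniq (ups v).
Proof.
rewrite /ups map_inj_uniq ?filter_uniq ?iota_uniq //; exact: incr_nth_inj.
Qed.

Lemma uniq_downs v : uniq (downs v).
Proof.
rewrite /downs map_inj_in_uniq ?filter_uniq ?iota_uniq //.
move=> i j; rewrite !mem_filter /remok => /andP[ri _] /andP[rj _] e.
have := congr1 (fun s => nth 0 s i) e; rewrite !nth_rmc eqxx.
case: eqP => [//|_]; lia.
Qed.

Lemma sum_sub_uniq (T : eqType) (s r : seq T) (f : T -> nat) :
  uniq s -> uniq r -> {subset s <= r} ->
  \sum_(x <- s) f x = \sum_(x <- r | x \in s) f x.
Proof.
move=> us ur sr; rewrite -[RHS]big_filter; apply: perm_big.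
apply: uniq_perm => //; first exact: filter_uniq.
move=> x; rewrite mem_filter; apply/idP/andP => [xs|[]//]; split => //; exact: sr.
Qed.

Lemma sum_sub_le (T : eqType) (s r : seq T) (f : T -> nat) :
  uniq s -> uniq r -> {subset s <= r} ->
  \sum_(x <- s) f x <= \sum_(x <- r) f x.
Proof.
move=> us ur sr; rewrite (sum_sub_uniq f us ur sr).
rewrite [X in _ <= X](bigID (fun x => x \in s)) /=; exact: leq_addr.
Qed.

Lemma part_sumn0 x : ispart x -> sumn x = 0 -> x = [::].
Proof.
case: x => // a x px /= h.
have := size_part_lt 0 px; rewrite /= => e; move: e h; lia.
Qed.

Lemma Ubound k t (L : seq (seq nat)) : uniq L ->
  (forall x, x \in L -> ispart x /\ sumn x = k) ->
  \sum_(x <- L) F x * NW x t <= NW [::] (nseq k true ++ t).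
Proof.
elim: k t L => [|k IH] t L uL hL.
  have allnil : forall x, x \in L -> x = [::].
    by move=> x /hL [px sx]; apply: part_sumn0.
  case: L uL allnil {hL} => [|x [|y L]] uL an; first by rewrite big_nil.
    by rewrite big_cons big_nil (an x) ?mem_head // mul1n addn0.
  exfalso; move: uL; rewrite /= (an x) ?mem_head // (an y) ?inE ?eqxx ?orbT //.
pose L' := undup (flatten (map downs L)).
have uL' : uniq L' by apply: undup_uniq.
have hL' : forall y, y \in L' -> ispart y /\ sumn y = k.
  move=> y; rewrite mem_undup => /flattenP[s /mapP[x xL ->] yd].
  have [px sx] := hL x xL; split; first exact: downs_part yd.
  by rewrite (downs_sumn yd) sx.
rewrite nseqS_cat; apply: leq_trans (IH (true :: t) L' uL' hL').
have sub : forall x, x \in L -> {subset downs x <= L'}.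
  move=> x xL y yd; rewrite mem_undup; apply/flattenP; exists (downs x) => //.
  exact: map_f.
rewrite (_ : \sum_(x <- L) F x * NW x t =
   \sum_(x <- L) \sum_(y <- L' | y \in downs x) F y * NW x t); last first.
  apply: eq_big_seq => x xL.
  have [px sx] := hL x xL.
  rewrite (F_rec sx) big_distrl /=.
  by rewrite (sum_sub_uniq (fun y => F y * NW x t) (uniq_downs x) uL' (sub x xL)).
rewrite (exchange_big_dep xpredT) //=.
rewrite [X in X <= _]big_seq_cond [X in _ <= X]big_seq_cond; apply: leq_sum => y /andP[yL' _].
rewrite -big_distrr /= leq_mul2l; apply/orP; right.
rewrite /= -big_filter.
apply: sum_sub_le; first exact: filter_uniq.
  exact: uniq_ups.
move=> x; rewrite mem_filter => /andP[yd xL].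
by apply: downs_ups yd; have [] := hL x xL.
Qed.

Lemma F_sq_bound mu : ispart mu -> F mu * F mu <= (sumn mu)`!.
Proof.
move=> pm; rewrite -NW_fact.
have := Ubound (nseq (sumn mu) false) (L := [:: mu]) erefl.
rewrite big_cons big_nil addn0; apply => x; rewrite inE => /eqP ->; by split.
Qed.


Lemma part_mono s a b : ispart s -> a <= b -> nth 0 s b <= nth 0 s a.
Proof.
move=> [d _] /subnK <-; elim: (b - a) => [|m IH] //=.
by rewrite addSn; apply: leq_trans (d _) IH.
Qed.

Lemma F_downs v : ispart v -> 0 < sumn v ->
  F v = \sum_(j < size v | remok v j) F (rmc v j).
Proof.
move=> pv h; rewrite (F_rec (n := (sumn v).-1)); last lia.
exact: sum_downs.
Qed.

Lemma F_downsM v M : ispart v -> 0 < sumn v -> size v <= M ->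
  F v = \sum_(j < M | remok v j) F (rmc v j).
Proof.
move=> pv h hM; rewrite (F_rec (n := (sumn v).-1)); last lia.
exact: sum_downs.
Qed.

Lemma sum_remok_nil v M (f : nat -> nat) : sumn v = 0 ->
  \sum_(j < M | remok v j) f j = 0.
Proof.
move=> h; rewrite big1 // => j; rewrite /remok.
by have := nth_le_sumn v j; rewrite h; lia.
Qed.

Lemma sum_rem_F v M : ispart v -> size v <= M ->
  \sum_(j < M | remok v j) F (rmc v j) <= F v.
Proof.
move=> pv hM; case: (posnP (sumn v)) => h.
  by rewrite (sum_remok_nil M (fun j => F (rmc v j))).
by rewrite (F_downsM pv h hM).
Qed.

Lemma last_behead s : last 1 s != 0 -> last 1 (behead s) != 0.
Proof. by case: s => //= x [|y s]. Qed.

Lemma ispart_behead s : ispart s -> ispart (behead s).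
Proof.
move=> [d l]; split; last exact: last_behead.
by move=> r; rewrite !nth_behead.
Qed.

Lemma sumn_behead (s : seq nat) : sumn s = nth 0 s 0 + sumn (behead s).
Proof. by case: s. Qed.

Lemma row_upper n v : ispart v -> sumn v = n ->
  F v <= 'C(n, sumn (behead v)) * F (behead v).
Proof.
elim: n v => [|n IH] v pv sv.
  by rewrite (part_sumn0 pv sv) /= mul1n.
have [d l] := pv.
have sz : 0 < size v by case: v sv {pv d l}.
rewrite (F_downs pv); last by rewrite sv.
case E: (size v) sz => [//|m] _.
rewrite big_mkcond big_ord_recl /= -big_mkcond /=.
set k := sumn (behead v).
have T0 : (if remok v 0 then F (rmc v 0) else 0) <= 'C(n, k) * F (behead v).
  case: ifP => // r0.
  have e : behead (rmc v 0) = behead v.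
    apply: canon_eq; [exact/last_behead/last_strip | exact: last_behead |].
    by move=> r; rewrite !nth_behead nth_rmc subn0.
  have := IH _ (ispart_rmc pv r0); rewrite sumn_rmc // sv e; exact.
set S := \sum_(i < m | remok (behead v) i) F (rmc (behead v) i).
have SF : S <= F (behead v).
  apply: sum_rem_F; first exact: ispart_behead.
  by rewrite size_behead E.
have T1 : \sum_(i < m | remok v (bump 0 i)) F (rmc v (bump 0 i))
    <= 'C(n, k.-1) * S.
  have e : forall i, remok v i.+1 -> behead (rmc v i.+1) = rmc (behead v) i.
    move=> i ri; apply: canon_eq; [exact/last_behead/last_strip | exact: last_strip |].
    by move=> r; rewrite !nth_behead !nth_rmc nth_behead eqSS.
  have -> : \sum_(i < m | remok v (bump 0 i)) F (rmc v (bump 0 i)) =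
     \sum_(i < m | remok (behead v) i) F (rmc v i.+1).
    by apply: eq_big => i; rewrite /remok ?nth_behead /bump leq0n add1n.
  apply: leq_trans (_ : \sum_(i < m | remok (behead v) i)
       'C(n, k.-1) * F (rmc (behead v) i) <= _).
    apply: leq_sum => i ri0.
    have ri : remok v i.+1 by move: ri0; rewrite /remok !nth_behead.
    have := IH _ (ispart_rmc pv ri); rewrite sumn_rmc // sv e //= => /(_ erefl).
    by rewrite sumn_rmc.
  by rewrite -big_distrr.
apply: leq_trans (leq_add T0 T1) _.
case: (posnP k) => hk.
  rewrite /S (sum_remok_nil m (fun i => F (rmc (behead v) i))) // muln0 addn0.
  by rewrite hk !bin0.
apply: leq_trans (leq_add (leqnn _) (leq_mul (leqnn _) SF)) _.
rewrite -mulnDl leq_mul2r; apply/orP; right.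
by rewrite -(ltn_predK hk) binS.
Qed.

Definition ctail (v : seq nat) := strip (map predn v).

Lemma nth_ctail v r : nth 0 (ctail v) r = (nth 0 v r).-1.
Proof.
rewrite /ctail nth_strip; case: (ltnP r (size v)) => h.
  by rewrite (nth_map 0).
by rewrite !nth_default ?size_map.
Qed.

Lemma ispart_ctail v : ispart v -> ispart (ctail v).
Proof.
move=> [d l]; split; last exact: last_strip.
by move=> r; rewrite !nth_ctail; have := d r; lia.
Qed.

Lemma size_ctail v : size (ctail v) <= size v.
Proof. by rewrite /ctail (leq_trans (size_strip _)) // size_map. Qed.

Lemma sumn_ge_size (s : seq nat) : all (fun x => 0 < x) s -> size s <= sumn s.
Proof. elim: s => //= x s IH /andP[hx hs]; have := IH hs; lia. Qed.

Lemma sumn_pred (s : seq nat) : all (fun x => 0 < x) s -> sumn (map predn s) = sumn s - size s.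
Proof.
elim: s => //= x s IH /andP[hx hs]; rewrite IH //; have := sumn_ge_size hs; lia.
Qed.

Lemma part_pos v : ispart v -> all (fun x => 0 < x) v.
Proof.
move=> pv; apply/(all_nthP 0) => i hi; by rewrite -size_part_lt.
Qed.

Lemma sumn_ctail v : ispart v -> sumn (ctail v) = sumn v - size v.
Proof. by move=> pv; rewrite /ctail sumn_strip sumn_pred // part_pos. Qed.

Lemma sum_le_one M (P : pred 'I_M) (f : 'I_M -> nat) c :
  (forall i j, P i -> P j -> i = j) -> (forall i, P i -> f i <= c) ->
  \sum_(i < M | P i) f i <= c.
Proof.
move=> u b; case: (pickP P) => [i0 Pi0|none].
  rewrite (bigD1 i0) //= big1 ?addn0 ?b // => i /andP[Pi ne].
  by move: ne; rewrite (u _ _ Pi Pi0) eqxx.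
by rewrite big_pred0.
Qed.

Lemma col_upper n v : ispart v -> sumn v = n ->
  F v <= 'C(n, sumn (ctail v)) * F (ctail v).
Proof.
elim: n v => [|n IH] v pv sv.
  rewrite (part_sumn0 pv sv) /=.
  by rewrite /F.
have [d l] := pv.
rewrite (F_downs pv); last by rewrite sv.
set k := sumn (ctail v).
rewrite (bigID (fun j : 'I_(size v) => nth 0 v j == 1)) /=.
have T0 : \sum_(i < size v | remok v i && (nth 0 v i == 1)) F (rmc v i)
    <= 'C(n, k) * F (ctail v).
  apply: sum_le_one.
    move=> i j /andP[ri /eqP ei] /andP[rj /eqP ej]; apply: val_inj => /=.
    have hi := size_part_lt i.+1 pv; have hj := size_part_lt j.+1 pv.
    move: ri rj; rewrite /remok ei ej => ri rj.
    have := ltn_ord i; have := ltn_ord j; move: hi hj.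
    lia.
  move=> i /andP[ri /eqP ei].
  have e : ctail (rmc v i) = ctail v.
    apply: canon_eq; [exact: last_strip | exact: last_strip |].
    by move=> r; rewrite !nth_ctail nth_rmc; case: eqP => [->|]; lia.
  have := IH _ (ispart_rmc pv ri); rewrite sumn_rmc // sv e => /(_ erefl); exact.
set S := \sum_(i < size v | remok (ctail v) i) F (rmc (ctail v) i).
have SF : S <= F (ctail v).
  apply: sum_rem_F; first exact: ispart_ctail.
  exact: size_ctail.
have T1 : \sum_(i < size v | remok v i && (nth 0 v i != 1)) F (rmc v i)
    <= 'C(n, k.-1) * S.
  rewrite /S big_distrr /=.
  rewrite (eq_bigl (fun i : 'I_(size v) => remok (ctail v) i)); last first.
    by move=> i; rewrite /remok !nth_ctail; lia.
  apply: leq_sum => i ri0.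
  have ri : remok v i by move: ri0; rewrite /remok !nth_ctail; lia.
  have e : ctail (rmc v i) = rmc (ctail v) i.
    apply: canon_eq; [exact: last_strip | exact: last_strip |].
    move=> r; rewrite !nth_ctail !nth_rmc !nth_ctail; move: ri0; rewrite /remok !nth_ctail.
    by case: eqP => [->|]; lia.
  have := IH _ (ispart_rmc pv ri); rewrite sumn_rmc // sv e => /(_ erefl).
  by rewrite sumn_rmc.
apply: leq_trans (leq_add T0 T1) _.
case: (posnP k) => hk.
  rewrite /S (sum_remok_nil (size v) (fun i => F (rmc (ctail v) i))) // muln0 addn0.
  by rewrite hk !bin0.
apply: leq_trans (leq_add (leqnn _) (leq_mul (leqnn _) SF)) _.
rewrite -mulnDl leq_mul2r; apply/orP; right.
by rewrite -(ltn_predK hk) binS.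
Qed.


Lemma sum_ge1 M (P : pred 'I_M) (f : 'I_M -> nat) i : P i -> f i <= \sum_(j < M | P j) f j.
Proof. by move=> Pi; rewrite (bigD1 i) //= leq_addr. Qed.

Lemma sum_ge2 M (P : pred 'I_M) (f : 'I_M -> nat) i j : P i -> P j -> i != j ->
  f i + f j <= \sum_(k < M | P k) f k.
Proof.
move=> Pi Pj ne; rewrite (bigD1 i) //= leq_add2l (bigD1 j) /= ?leq_addr //.
by rewrite Pj eq_sym.
Qed.

Lemma last_rem v : ispart v -> 0 < size v -> remok v (size v).-1.
Proof.
move=> pv h; rewrite /remok (nth_default 0 (_ : size v <= (size v).-1.+1)); last lia.
by rewrite -size_part_lt //; lia.
Qed.

Lemma F_pos n v : ispart v -> sumn v = n -> 0 < F v.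
Proof.
elim: n v => [|n IH] v pv sv; first by rewrite (part_sumn0 pv sv).
have sz : 0 < size v by case: v sv {pv}.
rewrite (F_downs pv); last by rewrite sv.
have j1lt : (size v).-1 < size v by lia.
pose j1 : 'I_(size v) := Ordinal j1lt.
apply: leq_trans (sum_ge1 (fun j => F (rmc v j)) (_ : remok v j1)).
  apply: (IH _ (ispart_rmc pv _)); first exact: last_rem.
  by rewrite sumn_rmc ?sv //; exact: last_rem.
exact: last_rem.
Qed.

Lemma sumn_ge01 (v : seq nat) : nth 0 v 0 + nth 0 v 1 <= sumn v.
Proof. case: v => [|x [|y s]] //=; lia. Qed.

Lemma row_lower n v : ispart v -> sumn v = n ->
  'C(nth 0 v 0, n - nth 0 v 0) <= F v.
Proof.
elim: n v => [|n IH] v pv sv; first by rewrite (part_sumn0 pv sv).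
have sz : 0 < size v by case: v sv {pv}.
have Fp := F_pos pv sv.
set a := nth 0 v 0.
have a0 : 0 < a by rewrite /a -size_part_lt.
case: (posnP (n.+1 - a)) => hk; first by rewrite hk bin0.
have sz2 : 1 < size v.
  case: v sv pv sz {Fp} @a a0 hk => [|x [|y s]] //= sv pv _ a0 hk; lia.
have j1lt : (size v).-1 < size v by lia.
pose j1 : 'I_(size v) := Ordinal j1lt.
have r1 : remok v j1 by exact: last_rem.
case r0: (remok v 0).
  rewrite (F_downs pv); last by rewrite sv.
  pose j0 : 'I_(size v) := Ordinal sz.
  have ne : j0 != j1 by rewrite -val_eqE /=; lia.
  apply: leq_trans (sum_ge2 (fun j => F (rmc v j)) r0 r1 ne).
  have A0 := IH _ (ispart_rmc pv r0) (etrans (sumn_rmc r0) (congr1 predn sv)).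
  have A1 := IH _ (ispart_rmc pv r1) (etrans (sumn_rmc r1) (congr1 predn sv)).
  move: A0 A1; rewrite /= !nth_rmc /= subn1 -/a.
  have -> : (0 == (size v).-1) = false by lia.
  rewrite subn0 => A0 A1.
  have E1 : n.+1 - a = (n - a).+1 by lia.
  have E2 : n - a.-1 = (n - a).+1 by lia.
  rewrite E2 in A0; rewrite E1.
  move: A0 A1; move: (n - a) => c A0 A1.
  have -> : a = a.-1.+1 by lia.
  rewrite binS /=.
  apply: leq_add => //; apply: leq_trans A1; apply: leq_bin2l; lia.
have e1 : nth 0 v 1 = a.
  by move: r0; rewrite /remok -/a; have := part_mono pv (leqnSn 0); lia.
have s2 := sumn_ge01 v; rewrite e1 -/a sv in s2.
case: (ltngtP a (n.+1 - a)) => h.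
- by rewrite bin_small.
- lia.
- by rewrite -h binn.
Qed.

Lemma ex_step (P : pred nat) N : P 0 -> ~~ P N -> exists2 j, j < N & P j && ~~ P j.+1.
Proof.
elim: N => [|N IH] p0 pN; first by rewrite p0 in pN.
case PN: (P N); first by exists N => //; rewrite PN.
have [j jl hj] := IH p0 (negbT PN); exists j => //; lia.
Qed.

Lemma size_eq w N : ispart w -> (forall r, (r < N) = (0 < nth 0 w r)) -> size w = N.
Proof.
move=> pw h; have e : forall r, (r < size w) = (r < N) by move=> r; rewrite h size_part_lt.
apply/eqP; rewrite eqn_leq; apply/andP; split.
  by case: (size w) e => // m e; rewrite -e.
by case: N e {h} => // m e; rewrite e.
Qed.

Lemma sumn_ge_mul v c : ispart v -> (forall r, r < size v -> c <= nth 0 v r) -> c * size v <= sumn v.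
Proof.
move=> pv h; rewrite (sumn_nth_lt (leqnn _)).
have -> : c * size v = \sum_(i < size v) c by rewrite sum_nat_const card_ord mulnC.
by apply: leq_sum => i _; apply: h.
Qed.

Lemma sumn_le_mul v c : ispart v -> (forall r, c >= nth 0 v r) -> sumn v <= c * size v.
Proof.
move=> pv h; rewrite (sumn_nth_lt (leqnn _)).
have -> : c * size v = \sum_(i < size v) c by rewrite sum_nat_const card_ord mulnC.
by apply: leq_sum => i _; apply: h.
Qed.

Lemma col_lower n v : ispart v -> sumn v = n ->
  'C(size v, n - size v) <= F v.
Proof.
elim: n v => [|n IH] v pv sv; first by rewrite (part_sumn0 pv sv).
have sz : 0 < size v by case: v sv {pv}.
have Fp := F_pos pv sv.
set l := size v.
case: (posnP (n.+1 - l)) => hk; first by rewrite hk bin0.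
have j1lt : l.-1 < l by lia.
pose j1 : 'I_l := Ordinal j1lt.
have r1 : remok v j1 by exact: last_rem.
case: (ltnP 1 (nth 0 v j1)) => big.
  have : 2 * l <= n.+1.
    rewrite -sv; apply: sumn_ge_mul => // r rl.
    apply: leq_trans big (part_mono pv _) => /=; lia.
  move=> h2; case: (ltngtP l (n.+1 - l)) => h.
  - by rewrite bin_small.
  - lia.
  - by rewrite -h binn.
have v1 : nth 0 v j1 = 1 by move: r1; rewrite /remok; lia.
have v0 : 1 < nth 0 v 0.
  rewrite ltnNge; apply/negP => h.
  have := sumn_le_mul pv (c := 1) (fun r => leq_trans (part_mono pv (leq0n r)) h).
  rewrite sv -/l; lia.
have nP : ~~ (1 < nth 0 v j1) by rewrite v1.
have [j jl /andP[pj npj]] := ex_step (P := fun r => 1 < nth 0 v r) v0 nP.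
have jl' : j < l by move: jl => /=; lia.
pose j2 : 'I_l := Ordinal jl'.
have r2 : remok v j2 by rewrite /remok /=; lia.
have ne : j2 != j1 by rewrite -val_eqE /=; move: jl => /=; lia.
rewrite (F_downs pv); last by rewrite sv.
apply: leq_trans (sum_ge2 (fun j => F (rmc v j)) r2 r1 ne).
have A2 := IH _ (ispart_rmc pv r2) (etrans (sumn_rmc r2) (congr1 predn sv)).
have A1 := IH _ (ispart_rmc pv r1) (etrans (sumn_rmc r1) (congr1 predn sv)).
have S2 : size (rmc v j2) = l.
  apply: size_eq; first exact: ispart_rmc.
  move=> r; rewrite nth_rmc /=; have hl := size_part_lt r pv.
  case: eqP => [->|_]; last by rewrite subn0 -hl.
  rewrite jl'; move: pj => /=; lia.
have S1 : size (rmc v j1) = l.-1.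
  apply: size_eq; first exact: ispart_rmc.
  move=> r; rewrite nth_rmc /=.
  case: eqP => [->|ne1]; first by rewrite v1 /=; lia.
  case: (ltnP r l.-1) => hr.
    have := part_mono pv (ltnW hr); rewrite /= in v1; rewrite v1; lia.
  by rewrite nth_default /=; lia.
rewrite /= S1 S2 in A1 A2.
have E1 : n.+1 - l = (n - l).+1 by lia.
have E2 : n - l.-1 = (n - l).+1 by lia.
rewrite E2 in A1; rewrite E1.
move: A1 A2; move: (n - l) => c A1 A2.
have -> : 'C(l, c.+1) = 'C(l.-1, c.+1) + 'C(l.-1, c) by rewrite -binS prednK.
rewrite addnC.
apply: leq_add => //; apply: leq_trans A2; apply: leq_bin2l; lia.
Qed.


Definition syt N (la : seq nat) (t : {ffun 'I_N * 'I_N -> 'I_N.+1}) : bool :=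
  [&& [forall c : 'I_N * 'I_N,
         (nat_of_ord (t c) != 0) == in_shape la c.1 c.2],
      [forall c : 'I_N * 'I_N, forall d : 'I_N * 'I_N,
         [&& in_shape la c.1 c.2, in_shape la d.1 d.2 & t c == t d] ==> (c == d)],
      [forall c : 'I_N * 'I_N, forall d : 'I_N * 'I_N,
         [&& in_shape la d.1 d.2, nat_of_ord c.1 == d.1 & nat_of_ord c.2 < d.2]
           ==> (nat_of_ord (t c) < t d)] &
      [forall c : 'I_N * 'I_N, forall d : 'I_N * 'I_N,
         [&& in_shape la d.1 d.2, nat_of_ord c.2 == d.2 & nat_of_ord c.1 < d.1]
           ==> (nat_of_ord (t c) < t d)]].

Arguments syt : clear implicits.

Definition cnt N la := #|[set t : {ffun 'I_N * 'I_N -> 'I_N.+1} | syt N la t]|.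

Lemma nsyt_cnt la : nsyt la = cnt (sumn la) la.
Proof. by []. Qed.

Lemma sytP N la (t : {ffun 'I_N * 'I_N -> 'I_N.+1}) : reflect
  [/\ forall c : 'I_N * 'I_N, (nat_of_ord (t c) != 0) = in_shape la c.1 c.2,
      forall c d : 'I_N * 'I_N, in_shape la c.1 c.2 -> in_shape la d.1 d.2 -> t c = t d -> c = d,
      forall c d : 'I_N * 'I_N, in_shape la d.1 d.2 -> nat_of_ord c.1 = d.1 -> nat_of_ord c.2 < d.2 -> nat_of_ord (t c) < t d &
      forall c d : 'I_N * 'I_N, in_shape la d.1 d.2 -> nat_of_ord c.2 = d.2 -> nat_of_ord c.1 < d.1 -> nat_of_ord (t c) < t d]
  (syt N la t).
Proof.
apply: (iffP and4P) => [[/forallP h1 /forallP h2 /forallP h3 /forallP h4]|[h1 h2 h3 h4]].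
  split.
  - by move=> c; have /eqP := h1 c.
  - move=> c d sc sd e; have /forallP/(_ d) := h2 c.
    by rewrite sc sd e eqxx => /eqP.
  - move=> c d sd e lt; have /forallP/(_ d) := h3 c.
    by rewrite sd e eqxx lt => /implyP; apply.
  - move=> c d sd e lt; have /forallP/(_ d) := h4 c.
    by rewrite sd e eqxx lt => /implyP; apply.
split.
- by apply/forallP => c; rewrite h1.
- apply/forallP => c; apply/forallP => d; apply/implyP => /and3P[sc sd /eqP e].
  by rewrite (h2 _ _ sc sd e).
- apply/forallP => c; apply/forallP => d; apply/implyP => /and3P[sd /eqP e lt].
  exact: h3.
- apply/forallP => c; apply/forallP => d; apply/implyP => /and3P[sd /eqP e lt].
  exact: h4.
Qed.

Lemma cell_lt mu i k : ispart mu -> in_shape mu i k -> i < sumn mu /\ k < sumn mu.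
Proof.
move=> pm; rewrite /in_shape => h; split.
  have : i < size mu by rewrite size_part_lt //; lia.
  by move=> /leq_trans; apply; apply: sumn_ge_size; apply: part_pos.
exact: leq_trans h (nth_le_sumn _ _).
Qed.

Lemma val_inord n m : nat_of_ord (inord m : 'I_n.+1) = if m < n.+1 then m else 0.
Proof. by rewrite /inord val_insubd. Qed.

Lemma sum_lt M m : \sum_(k < M) (if k < m then 1 else 0) = minn m M.
Proof.
elim: M => [|M IH]; first by rewrite big_ord0 minn0.
rewrite big_ord_recr /= IH; case: ltnP; lia.
Qed.

Lemma card_shape N la : ispart la -> sumn la = N ->
  #|[set c : 'I_N * 'I_N | in_shape la c.1 c.2]| = N.
Proof.
move=> pl sl.
rewrite -sum1_card big_mkcond /=.
rewrite (eq_bigr (fun p : 'I_N * 'I_N => (fun i j => if j < nth 0 la i then 1 else 0) p.1 p.2)); last first.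
  by move=> [i k] _; rewrite inE.
rewrite -(pair_bigA _ (fun (i j : 'I_N) => if j < nth 0 la i then 1 else 0)) /=.
rewrite (eq_bigr (fun i : 'I_N => nth 0 la i)).
  rewrite -sumn_nth_lt // -sl; apply: sumn_ge_size; exact: part_pos.
move=> i _; rewrite sum_lt; have := nth_le_sumn la i; rewrite sl; lia.
Qed.

Lemma syt_max n la (t : {ffun 'I_n.+1 * 'I_n.+1 -> 'I_n.+2}) :
  ispart la -> sumn la = n.+1 -> syt n.+1 la t ->
  exists2 c : 'I_n.+1 * 'I_n.+1, in_shape la c.1 c.2 & t c = ord_max.
Proof.
move=> pl sl /sytP[h1 h2 _ _].
set A := [set c : 'I_n.+1 * 'I_n.+1 | in_shape la c.1 c.2].
have cA := card_shape pl sl.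
have sub : t @: A \subset [set~ ord0].
  apply/subsetP => v /imsetP[c]; rewrite inE => sc ->.
  rewrite !inE; apply/negP => /eqP e; move: (h1 c); rewrite sc e /=; done.
have cI : #|t @: A| = n.+1.
  rewrite card_in_imset ?cA // => c d; rewrite !inE; exact: h2.
have eqA : t @: A = [set~ ord0].
  by apply/eqP; rewrite eqEcard sub cardsC1 card_ord cI /=.
have : (ord_max : 'I_n.+2) \in t @: A by rewrite eqA !inE.
by case/imsetP => c; rewrite inE => sc ->; exists c.
Qed.

Definition iscorner (la : seq nat) j (i k : nat) := (i == j) && (k == (nth 0 la j).-1).

Definition wc n (c : 'I_n * 'I_n) : 'I_n.+1 * 'I_n.+1 :=
  (widen_ord (leqnSn n) c.1, widen_ord (leqnSn n) c.2).

Definition res n (t : {ffun 'I_n.+1 * 'I_n.+1 -> 'I_n.+2}) : {ffun 'I_n * 'I_n -> 'I_n.+1} :=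
  [ffun c => inord (t (wc c))].

Definition ext n (la : seq nat) j (t' : {ffun 'I_n * 'I_n -> 'I_n.+1}) :
    {ffun 'I_n.+1 * 'I_n.+1 -> 'I_n.+2} :=
  [ffun c : 'I_n.+1 * 'I_n.+1 => if iscorner la j c.1 c.2 then ord_max else
     match (insub (val c.1) : option 'I_n), (insub (val c.2) : option 'I_n) with
     | Some a, Some b => widen_ord (leqnSn n.+1) (t' (a, b))
     | _, _ => ord0 end].

Lemma res_val n t (c : 'I_n * 'I_n) :
  nat_of_ord (res t c) = if nat_of_ord (t (wc c)) < n.+1 then nat_of_ord (t (wc c)) else 0.
Proof. by rewrite ffunE val_inord. Qed.

Lemma ext_corner n la j t' (c : 'I_n.+1 * 'I_n.+1) :
  iscorner la j c.1 c.2 -> ext la j t' c = ord_max.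
Proof. by move=> h; rewrite ffunE h. Qed.

Lemma ext_in n la j t' (c : 'I_n.+1 * 'I_n.+1) (h1 : c.1 < n) (h2 : c.2 < n) :
  ~~ iscorner la j c.1 c.2 ->
  nat_of_ord (ext la j t' c) = t' (Ordinal h1, Ordinal h2).
Proof.
move=> nc; rewrite ffunE (negbTE nc) (insubT (fun x => x < n) h1) (insubT (fun x => x < n) h2) /=.
by [].
Qed.

Lemma ext_out n la j t' (c : 'I_n.+1 * 'I_n.+1) :
  ~~ iscorner la j c.1 c.2 -> ~~ ((c.1 < n) && (c.2 < n)) ->
  nat_of_ord (ext la j t' c) = 0.
Proof.
move=> nc; rewrite ffunE (negbTE nc) negb_and => /orP[h|h].
  by case: insubP => [a ha _|//]; rewrite ha in h.
case: insubP => [a _ _|//]; case: insubP => [b hb _|//]; by rewrite hb in h.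
Qed.

Lemma shape_rmc la j i k :
  in_shape (rmc la j) i k = in_shape la i k && ~~ iscorner la j i k.
Proof.
rewrite /in_shape /iscorner nth_rmc; case: eqP => [->|_] /=; lia.
Qed.


Lemma corner_shape la j : remok la j -> in_shape la j (nth 0 la j).-1.
Proof. rewrite /remok /in_shape; lia. Qed.

Definition cj n (la : seq nat) j : 'I_n.+1 * 'I_n.+1 := (inord j, inord (nth 0 la j).-1).

Lemma cj_vals n la j : ispart la -> sumn la = n.+1 -> remok la j ->
  nat_of_ord (cj n la j).1 = j /\ nat_of_ord (cj n la j).2 = (nth 0 la j).-1.
Proof.
move=> pl sl rj; have [h1 h2] := cell_lt pl (corner_shape rj).
by rewrite /cj /= !inordK // -sl.
Qed.

Lemma corner_eq n la j (c : 'I_n.+1 * 'I_n.+1) : ispart la -> sumn la = n.+1 -> remok la j ->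
  iscorner la j c.1 c.2 -> c = cj n la j.
Proof.
move=> pl sl rj /andP[/eqP e1 /eqP e2]; have [v1 v2] := cj_vals pl sl rj.
by case: c e1 e2 => [a b] /= e1 e2; congr (_, _); apply: val_inj; rewrite /= ?v1 ?v2.
Qed.

Lemma iscorner_cj n la j : ispart la -> sumn la = n.+1 -> remok la j ->
  iscorner la j (cj n la j).1 (cj n la j).2.
Proof. by move=> pl sl rj; have [v1 v2] := cj_vals pl sl rj; rewrite /iscorner v1 v2 !eqxx. Qed.

Lemma rmc_small n la j i k : ispart la -> sumn la = n.+1 -> remok la j ->
  in_shape la i k -> ~~ iscorner la j i k -> i < n /\ k < n.
Proof.
move=> pl sl rj s nc.
have := cell_lt (ispart_rmc pl rj) (_ : in_shape (rmc la j) i k).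
by rewrite sumn_rmc // sl; apply; rewrite shape_rmc s.
Qed.

Lemma syt_lt n la j (t : {ffun 'I_n.+1 * 'I_n.+1 -> 'I_n.+2}) (c : 'I_n.+1 * 'I_n.+1) :
  ispart la -> sumn la = n.+1 -> remok la j -> syt n.+1 la t -> t (cj n la j) = ord_max ->
  in_shape la c.1 c.2 -> ~~ iscorner la j c.1 c.2 -> nat_of_ord (t c) < n.+1.
Proof.
move=> pl sl rj /sytP[h1 h2 h3 h4] tc sc nc.
have := ltn_ord (t c); rewrite ltnS leq_eqVlt => /orP[/eqP e|//].
have e' : t c = t (cj n la j) by rewrite tc; apply: val_inj.
have cs : in_shape la (cj n la j).1 (cj n la j).2.
  by have [v1 v2] := cj_vals pl sl rj; rewrite v1 v2; exact: corner_shape.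
have := h2 _ _ sc cs e' => ce.
by move: nc; rewrite ce iscorner_cj.
Qed.

Lemma res_syt n la j (t : {ffun 'I_n.+1 * 'I_n.+1 -> 'I_n.+2}) :
  ispart la -> sumn la = n.+1 -> remok la j -> syt n.+1 la t -> t (cj n la j) = ord_max ->
  syt n (rmc la j) (res t).
Proof.
move=> pl sl rj st tc; have /sytP[h1 h2 h3 h4] := st.
have F1 := syt_lt pl sl rj st tc.
apply/sytP; split.
- move=> c; rewrite res_val shape_rmc.
  case sc: (in_shape la c.1 c.2) => /=; last first.
    by have := h1 (wc c); rewrite sc /= => /negbFE/eqP ->.
  case nc: (iscorner la j c.1 c.2) => /=.
    by rewrite (corner_eq pl sl rj (_ : iscorner la j (wc c).1 (wc c).2)) // tc /= ltnn.
  by rewrite (F1 (wc c)) ?nc // h1.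
- move=> c d; rewrite !shape_rmc => /andP[sc nc] /andP[sd nd] e.
  have := congr1 (@nat_of_ord _) e; rewrite !res_val (F1 (wc c)) // (F1 (wc d)) // => e'.
  have := h2 (wc c) (wc d) sc sd (val_inj e') => /(congr1 (fun p => (val p.1, val p.2))) /= [e1 e2].
  by case: c d {e e' sc sd nc nd} e1 e2 => [a b] [a' b'] /= e1 e2; congr (_, _); apply: val_inj.
- move=> c d; rewrite !shape_rmc => /andP[sd nd] e lt.
  rewrite !res_val (F1 (wc d)) //.
  have := h3 (wc c) (wc d) sd e lt => lt'.
  have := F1 (wc d) sd nd; case: ifP => _; lia.
- move=> c d; rewrite !shape_rmc => /andP[sd nd] e lt.
  rewrite !res_val (F1 (wc d)) //.
  have := h4 (wc c) (wc d) sd e lt => lt'.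
  have := F1 (wc d) sd nd; case: ifP => _; lia.
Qed.

Lemma ext_val n la j (t' : {ffun 'I_n * 'I_n -> 'I_n.+1}) (c : 'I_n.+1 * 'I_n.+1) (a b : 'I_n) :
  nat_of_ord c.1 = a -> nat_of_ord c.2 = b -> ~~ iscorner la j c.1 c.2 ->
  nat_of_ord (ext la j t' c) = t' (a, b).
Proof.
move=> e1 e2 nc.
have h1 : c.1 < n by rewrite e1.
have h2 : c.2 < n by rewrite e2.
rewrite (ext_in _ h1 h2 nc); congr (nat_of_ord (t' (_, _))); apply: val_inj => /=; by rewrite ?e1 ?e2.
Qed.

Lemma ext_syt n la j (t' : {ffun 'I_n * 'I_n -> 'I_n.+1}) :
  ispart la -> sumn la = n.+1 -> remok la j -> syt n (rmc la j) t' ->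
  syt n.+1 la (ext la j t').
Proof.
move=> pl sl rj /sytP[h1 h2 h3 h4].
have small := rmc_small pl sl rj.
have [v1 v2] := cj_vals pl sl rj.
have VN : forall c : 'I_n.+1 * 'I_n.+1, in_shape la c.1 c.2 -> ~~ iscorner la j c.1 c.2 ->
    exists a b : 'I_n, [/\ nat_of_ord c.1 = a, nat_of_ord c.2 = b & in_shape (rmc la j) a b].
  move=> c sc nc; have [s1 s2] := small _ _ sc nc.
  exists (Ordinal s1), (Ordinal s2); split => //=; by rewrite shape_rmc sc nc.
have Vlt : forall c : 'I_n.+1 * 'I_n.+1, in_shape la c.1 c.2 -> ~~ iscorner la j c.1 c.2 ->
    nat_of_ord (ext la j t' c) < n.+1.
  move=> c sc nc; have [a [b [e1 e2 _]]] := VN c sc nc.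
  by rewrite (ext_val _ e1 e2 nc).
apply/sytP; split.
- move=> c; case nc: (iscorner la j c.1 c.2).
    rewrite ext_corner //=; move: nc => /andP[/eqP -> /eqP ->]; by rewrite corner_shape.
  case sc: (in_shape la c.1 c.2).
    have [a [b [e1 e2 sab]]] := VN c sc (negbT nc).
    by rewrite (ext_val _ e1 e2 (negbT nc)) h1.
  case hs: ((c.1 < n) && (c.2 < n)).
    move: hs => /andP[s1 s2].
    rewrite (ext_val (a := Ordinal s1) (b := Ordinal s2) _ erefl erefl (negbT nc)) h1 /=.
    by rewrite shape_rmc sc.
  by rewrite ext_out ?nc ?hs.
- move=> c d sc sd.
  case nc: (iscorner la j c.1 c.2); case nd: (iscorner la j d.1 d.2).
  + by rewrite (corner_eq pl sl rj nc) (corner_eq pl sl rj nd).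
  + rewrite (ext_corner _ nc) => e.
    by have := Vlt d sd (negbT nd); rewrite -e /= ltnn.
  + rewrite (ext_corner _ nd) => e.
    by have := Vlt c sc (negbT nc); rewrite e /= ltnn.
  + move=> e.
    have [a [b [e1 e2 sab]]] := VN c sc (negbT nc).
    have [a' [b' [e1' e2' sab']]] := VN d sd (negbT nd).
    have := congr1 (@nat_of_ord _) e.
    rewrite (ext_val _ e1 e2 (negbT nc)) (ext_val _ e1' e2' (negbT nd)) => /val_inj e'.
    have := h2 (a, b) (a', b') sab sab' e' => -[ea eb].
    case: c d e1 e2 e1' e2' {e sc sd nc nd} => [c1 c2] [d1 d2] /= e1 e2 e1' e2'.
    by congr (_, _); apply: ord_inj; rewrite ?e1 ?e1' ?e2 ?e2' ?ea ?eb.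
- move=> c d sd e lt.
  have sc : in_shape la c.1 c.2 by move: sd; rewrite /in_shape e; lia.
  have nc : ~~ iscorner la j c.1 c.2.
    apply/negP => /andP[/eqP c1 /eqP c2]; move: sd; rewrite /in_shape -e c1; lia.
  case nd: (iscorner la j d.1 d.2).
    by rewrite (ext_corner _ nd); exact: Vlt.
  have [a [b [e1 e2 sab]]] := VN c sc nc.
  have [a' [b' [e1' e2' sab']]] := VN d sd (negbT nd).
  rewrite (ext_val _ e1 e2 nc) (ext_val _ e1' e2' (negbT nd)).
  apply: (h3 (a, b) (a', b')) => /=; lia.
- move=> c d sd e lt.
  have sc : in_shape la c.1 c.2.
    move: sd; rewrite /in_shape -e => /leq_trans; apply; apply: part_mono => //; lia.
  have nc : ~~ iscorner la j c.1 c.2.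
    apply/negP => /andP[/eqP c1 /eqP c2]; move: sd rj; rewrite /in_shape /remok -e c2.
    have := part_mono pl (_ : j.+1 <= d.1); rewrite c1 in lt; move=> /(_ lt); lia.
  case nd: (iscorner la j d.1 d.2).
    by rewrite (ext_corner _ nd); exact: Vlt.
  have [a [b [e1 e2 sab]]] := VN c sc nc.
  have [a' [b' [e1' e2' sab']]] := VN d sd (negbT nd).
  rewrite (ext_val _ e1 e2 nc) (ext_val _ e1' e2' (negbT nd)).
  apply: (h4 (a, b) (a', b')) => /=; lia.
Qed.


Lemma ext_res n la j (t : {ffun 'I_n.+1 * 'I_n.+1 -> 'I_n.+2}) :
  ispart la -> sumn la = n.+1 -> remok la j -> syt n.+1 la t -> t (cj n la j) = ord_max ->
  ext la j (res t) = t.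
Proof.
move=> pl sl rj st tc; have /sytP[h1 h2 h3 h4] := st.
have F1 := syt_lt pl sl rj st tc.
apply/ffunP => c; apply: val_inj => /=.
case nc: (iscorner la j c.1 c.2).
  by rewrite ext_corner // (corner_eq pl sl rj nc) tc.
case hs: ((c.1 < n) && (c.2 < n)).
  move: hs => /andP[s1 s2].
  rewrite (ext_val (a := Ordinal s1) (b := Ordinal s2) _ erefl erefl (negbT nc)) res_val.
  have -> : wc (Ordinal s1, Ordinal s2) = c by case: c {nc} s1 s2 => a b s1 s2; congr (_, _); apply: val_inj.
  case sc: (in_shape la c.1 c.2); first by rewrite F1 ?nc.
  by have := h1 c; rewrite sc => /negbFE/eqP ->.
rewrite ext_out ?nc ?hs //.
case sc: (in_shape la c.1 c.2).
  by have [s1 s2] := rmc_small pl sl rj sc (negbT nc); rewrite s1 s2 in hs.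
by have := h1 c; rewrite sc => /negbFE/eqP ->.
Qed.

Lemma res_ext n la j (t' : {ffun 'I_n * 'I_n -> 'I_n.+1}) :
  ispart la -> sumn la = n.+1 -> remok la j -> syt n (rmc la j) t' ->
  res (ext la j t') = t'.
Proof.
move=> pl sl rj /sytP[h1 h2 h3 h4].
apply/ffunP => c; apply: val_inj => /=.
rewrite res_val.
case nc: (iscorner la j (wc c).1 (wc c).2).
  rewrite ext_corner //= ltnn.
  have := h1 c; rewrite shape_rmc.
  by move: nc => /= ->; rewrite andbF => /negbFE/eqP ->.
rewrite (ext_val (c := wc c) (a := c.1) (b := c.2) _ erefl erefl (negbT nc)).
by case: c {nc} => a b /=; rewrite ltn_ord.
Qed.

Lemma card_Tj n la j : ispart la -> sumn la = n.+1 -> remok la j ->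
  #|[set t : {ffun 'I_n.+1 * 'I_n.+1 -> 'I_n.+2} | syt n.+1 la t && (t (cj n la j) == ord_max)]|
  = cnt n (rmc la j).
Proof.
move=> pl sl rj; rewrite /cnt.
set S' := [set t' : {ffun 'I_n * 'I_n -> 'I_n.+1} | syt n (rmc la j) t'].
have -> : [set t : {ffun 'I_n.+1 * 'I_n.+1 -> 'I_n.+2} | syt n.+1 la t && (t (cj n la j) == ord_max)]
    = ext la j @: S'.
  apply/setP => t; rewrite inE; apply/andP/imsetP.
    move=> [st /eqP tc]; exists (res t); last by rewrite ext_res.
    by rewrite inE; apply: res_syt.
  move=> [t' ]; rewrite inE => st' ->; split; first exact: ext_syt.
  by rewrite ext_corner // iscorner_cj.
rewrite card_in_imset // => t1 t2; rewrite !inE => s1 s2 e.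
by rewrite -(res_ext pl sl rj s1) -(res_ext pl sl rj s2) e.
Qed.


Lemma max_corner n la (t : {ffun 'I_n.+1 * 'I_n.+1 -> 'I_n.+2}) (c : 'I_n.+1 * 'I_n.+1) :
  ispart la -> sumn la = n.+1 -> syt n.+1 la t -> in_shape la c.1 c.2 -> t c = ord_max ->
  remok la c.1 /\ nat_of_ord c.2 = (nth 0 la c.1).-1.
Proof.
move=> pl sl /sytP[h1 h2 h3 h4] sc tc.
have hmax : forall d : 'I_n.+1 * 'I_n.+1, nat_of_ord (t c) < t d -> False.
  by move=> d; rewrite tc /=; have := ltn_ord (t d); lia.
have r : ~~ in_shape la c.1 c.2.+1.
  apply/negP => s; have [_ l2] := cell_lt pl s; rewrite sl in l2.
  apply: (hmax (c.1, inord c.2.+1)); apply: h3 => /=; rewrite ?inordK //.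
have d : ~~ in_shape la c.1.+1 c.2.
  apply/negP => s; have [l1 _] := cell_lt pl s; rewrite sl in l1.
  apply: (hmax (inord c.1.+1, c.2)); apply: h4 => /=; rewrite ?inordK //.
move: sc r d; rewrite /in_shape /remok => sc r d; split; lia.
Qed.

Lemma unique_corner n la (t : {ffun 'I_n.+1 * 'I_n.+1 -> 'I_n.+2}) :
  ispart la -> sumn la = n.+1 -> syt n.+1 la t ->
  \sum_(j < size la | remok la j) (t (cj n la j) == ord_max) = 1.
Proof.
move=> pl sl st; have [c sc tc] := syt_max pl sl st.
have [rc e2] := max_corner pl sl st sc tc.
have il : c.1 < size la by rewrite size_part_lt //; move: sc; rewrite /in_shape; lia.
pose i0 : 'I_(size la) := Ordinal il.
have ce : cj n la i0 = c.
  by apply/esym/(corner_eq pl sl rc); rewrite /iscorner e2 !eqxx.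
rewrite (bigD1 i0) //= ce tc eqxx big1 // => j /andP[rj ne].
case: eqP => // e.
have /sytP[_ h2 _ _] := st.
have cs : in_shape la (cj n la j).1 (cj n la j).2.
  by have [v1 v2] := cj_vals pl sl rj; rewrite v1 v2; exact: corner_shape.
have := h2 _ _ cs sc (etrans e (esym tc)) => /(congr1 (fun p => nat_of_ord p.1)).
have [v1 _] := cj_vals pl sl rj; rewrite v1 => ej.
by move: ne; rewrite -val_eqE /= ej eqxx.
Qed.

Lemma cnt_rec n la : ispart la -> sumn la = n.+1 ->
  cnt n.+1 la = \sum_(j < size la | remok la j) cnt n (rmc la j).
Proof.
move=> pl sl; rewrite /cnt -sum1_card.
rewrite (eq_bigr (fun t : {ffun 'I_n.+1 * 'I_n.+1 -> 'I_n.+2} => \sum_(j < size la | remok la j) (t (cj n la j) == ord_max) : nat)); last first.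
  by move=> t; rewrite inE => st; rewrite unique_corner.
rewrite exchange_big /=; apply: eq_bigr => j rj.
have := card_Tj pl sl rj; rewrite /cnt => <-.
rewrite -sum1_card big_mkcond /= [RHS]big_mkcond /=.
by apply: eq_bigr => t _; rewrite !inE; case: (syt _ _ _); case: (_ == _).
Qed.

Lemma cnt_nil : cnt 0 [::] = 1.
Proof.
rewrite /cnt.
have -> : [set t : {ffun 'I_0 * 'I_0 -> 'I_1} | syt 0 [::] t] = setT.
  apply/setP => t; rewrite !inE; apply/and4P; split; apply/forallP; by case=> [[]].
by rewrite cardsT card_ffun card_ord exp1n.
Qed.

Lemma nsyt_F n la : ispart la -> sumn la = n -> cnt n la = F la.
Proof.
elim: n la => [|n IH] la pl sl.
  by rewrite (part_sumn0 pl sl) cnt_nil.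
rewrite cnt_rec // (F_downs pl); last by rewrite sl.
apply: eq_bigr => j rj; apply: IH; first exact: ispart_rmc.
by rewrite sumn_rmc // sl.
Qed.


Lemma ffact_le_exp n k : n ^_ k <= n ^ k.
Proof.
elim: k n => [|k IH] n; first by rewrite ffactn0.
rewrite ffactnS expnS leq_mul2l; apply/orP; right.
apply: leq_trans (IH _) _; case: k {IH} => [|k]; rewrite ?expn0 // leq_exp2r //; lia.
Qed.

Lemma is_partition_ispart n la : is_partition n la -> ispart la.
Proof.
move=> /and3P[so po _]; split.
  move=> r; case: (ltnP r.+1 (size la)) => h; last by rewrite (nth_default 0 h).
  have hs := @sorted_leq_nth _ geq (fun y x z h1 h2 => leq_trans h2 h1) leqnn 0 la so r r.+1.
  apply: hs; rewrite ?inE //; lia.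
case: la so po => //= x s _ /andP[px ps].
have := mem_last x s; rewrite inE => /orP[/eqP ->|m]; first by rewrite -lt0n.
by rewrite -lt0n; move/allP: ps; apply.
Qed.

Lemma Fbounds n la : is_partition n la ->
  exists mu, [/\ ispart mu, sumn mu = aft la & F la <= 'C(n, aft la) * F mu]
  /\ ('C(n - aft la, aft la) <= F la).
Proof.
move=> ip; have pl := is_partition_ispart ip.
move: ip => /and3P[_ _ /eqP sl]; subst n.
rewrite /aft /part1 /plength.
have hd : head 0 la = nth 0 la 0 by case: la {pl}.
rewrite hd.
have a_le : nth 0 la 0 <= sumn la by apply: nth_le_sumn.
have l_le : size la <= sumn la by apply: sumn_ge_size; apply: part_pos.
case: (leqP (size la) (nth 0 la 0)) => h.
  have sb : sumn (behead la) = sumn la - nth 0 la 0 by rewrite [in RHS](sumn_behead la); lia.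
  exists (behead la); split; first split.
  - exact: ispart_behead.
  - exact: sb.
  - by rewrite -sb; apply: (row_upper pl).
  have := row_lower pl (erefl (sumn la)).
  by have -> : sumn la - (sumn la - nth 0 la 0) = nth 0 la 0 by lia.
have sc : sumn (ctail la) = sumn la - size la by rewrite sumn_ctail.
exists (ctail la); split; first split.
- exact: ispart_ctail.
- exact: sc.
- by rewrite -sc; apply: (col_upper pl).
have := col_lower pl (erefl (sumn la)).
by have -> : sumn la - (sumn la - size la) = size la by lia.
Qed.

Unset Implicit Arguments.
Import Order.TTheory GRing.Theory Num.Theory.
Local Open Scope ring_scope.

Theorem mainTheorem3 (R : rcfType) (n k : nat) (la : seq nat) :
  is_partition n la -> aft la = k ->
  (nsyt la)%:R <= (n ^ k)%:R / Num.sqrt (k`!)%:R :> R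
  /\ ('C(n - k, k) <= nsyt la)%N.
Proof.
move=> ip <-; have pl := is_partition_ispart ip.
have eF : nsyt la = F la by rewrite nsyt_cnt (nsyt_F pl erefl).
have [mu [[pm sm ub] lb]] := Fbounds ip.
rewrite eF; split => //.
have g2 : (F mu * F mu <= (aft la)`!)%N by rewrite -sm; apply: F_sq_bound.
have cf : ('C(n, aft la) * (aft la)`! <= n ^ aft la)%N by rewrite bin_ffact; apply: ffact_le_exp.
set s := Num.sqrt ((aft la)`!)%:R : R.
have fpos : (0 < (aft la)`!)%N := fact_gt0 _.
have s0 : 0 < s by rewrite /s sqrtr_gt0 ltr0n.
have ss : s * s = ((aft la)`!)%:R by rewrite -expr2 sqr_sqrtr // ler0n.
have gs : (F mu)%:R <= s.
  rewrite -[X in X <= _]ger0_norm ?ler0n // -sqrtr_sqr /s ler_sqrt ?ler0n //.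
  by rewrite -natrX ler_nat expnS expn1.
rewrite ler_pdivlMr //.
apply: le_trans (_ : ('C(n, aft la) * F mu)%:R * s <= _).
  by rewrite ler_pM2r // ler_nat.
rewrite natrM -mulrA.
apply: le_trans (_ : ('C(n, aft la))%:R * (s * s) <= _).
  by rewrite ler_wpM2l ?ler0n // ler_wpM2r // ltW.
by rewrite ss -natrM ler_nat.
Qed.
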